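(* Let $k\in\mathbb{Z}$. For all positive integers $x,n$, $$(-1)^{x-1}E_{n-1}^{(k)}(x)+E_{n-1}^{(k)}=\frac{2}{n}\sum_{m=1}^{n}\sum_{j=1}^{m}\sum_{i=0}^{x-1}(-1)^{i}i^{n-m}\binom{n}{m}\frac{S_{1}(m,j)}{j^{k-1}}.$$
   Context: Convention: $0^0=1$. For $k\in\mathbb{Z}$, $\mathrm{Ei}_k(x)=\sum_{n=1}^{\infty}\frac{x^n}{n^k(n-1)!}$. The poly-Genocchi polynomials $G_n^{(k)}(x)$ are defined by $\frac{2\,\mathrm{Ei}_k(\log(1+t))}{e^t+1}e^{xt}=\sum_{n=0}^{\infty}G_n^{(k)}(x)\frac{t^n}{n!}$; the poly-Euler polynomials are $E_n^{(k)}(x)=\frac{G_{n+1}^{(k)}(x)}{n+1}$ ($n\ge0$), and $E_n^{(k)}=E_n^{(k)}(0)$. $S_1(n,m)$ are the signed Stirling numbers of the first kind: $\frac{(\log(1+t))^m}{m!}=\sum_{n=m}^{\infty}S_1(n,m)\frac{t^n}{n!}$. *)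

(* Defs.v *)
From mathcomp Require Import all_boot all_order all_algebra.
Set Implicit Arguments. Unset Strict Implicit. Unset Printing Implicit Defensive.
Import Order.TTheory GRing.Theory Num.Theory.
Local Open Scope ring_scope.

(* a formal power series sum_n f n * t^n *)
Definition fps := nat -> rat.

Definition fone : fps := fun n => if n == 0%N then 1 else 0.
Definition fadd (f g : fps) : fps := fun n => f n + g n.
Definition fscale (c : rat) (f : fps) : fps := fun n => c * f n.
Definition fmul (f g : fps) : fps :=
  fun n => \sum_(i < n.+1) f i * g (n - i)%N.
Fixpoint fpow (f : fps) (m : nat) : fps :=
  match m with 0%N => fone | m'.+1 => fmul f (fpow f m') end.
(* composition f(g(t)); meaningful when g 0 = 0 *)
Definition fcomp (f g : fps) : fps :=
  fun n => \sum_(m < n.+1) f m * fpow g m n.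
(* multiplicative inverse of a series with nonzero constant term:
   b_0 = 1/a_0, b_n = -(1/a_0) * sum_{i=1}^n a_i b_{n-i} *)
Fixpoint finv_aux (f : fps) (n : nat) : seq rat :=
  match n with
  | 0%N => [:: (f 0%N)^-1]
  | n'.+1 => let s := finv_aux f n' in
      rcons s (- (f 0%N)^-1 * \sum_(i < n) f i.+1 * nth 0 s (n' - i)%N)
  end.
Definition finv (f : fps) : fps := fun n => nth 0 (finv_aux f n) n.

Definition fexp (x : rat) : fps := fun n => x ^+ n / (n`!)%:R.
Definition fexp_plus1 : fps := fadd (fexp 1) fone.
Definition flog1p : fps :=
  fun n => if n == 0%N then 0 else (-1) ^+ n.-1 / n%:R.
Definition fEi (k : int) : fps :=
  fun n => if n == 0%N then 0 else ((n%:R : rat) ^ k)^-1 / (n.-1`!)%:R.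

(* poly-Genocchi polynomials:
   2 Ei_k(log(1+t)) / (e^t+1) * e^{xt} = sum_n G_n^{(k)}(x) t^n/n! *)
Definition polyGenocchi (k : int) (x : rat) (n : nat) : rat :=
  (n`!)%:R * fmul (fscale 2 (fmul (fcomp (fEi k) flog1p) (finv fexp_plus1)))
                  (fexp x) n.

Definition polyEuler (k : int) (x : rat) (n : nat) : rat :=
  polyGenocchi k x n.+1 / (n.+1)%:R.

(* signed Stirling numbers of the first kind:
   (log(1+t))^m/m! = sum_n S1(n,m) t^n/n! *)
Definition stirling1 (n m : nat) : rat :=
  (n`!)%:R * fpow flog1p m n / (m`!)%:R.

(* Main.v *)
Require Import Defs.
From mathcomp Require Import all_boot all_order all_algebra.
From mathcomp Require Import ring.
Import Order.TTheory GRing.Theory Num.Theory.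
Set Implicit Arguments. Unset Strict Implicit. Unset Printing Implicit Defensive.
Local Open Scope ring_scope.
Local Notation finv := Defs.finv.

Lemma size_finv_aux f n : size (finv_aux f n) = n.+1.
Proof. by elim: n => [|n IH] //=; rewrite size_rcons IH. Qed.

Lemma nth_finv_aux f n j : (j <= n)%N -> nth 0 (finv_aux f n) j = finv f j.
Proof.
move=> hj; rewrite /Defs.finv -(subnKC hj); elim: (n - j)%N => [|m IH]; first by rewrite addn0.
by rewrite addnS /= nth_rcons size_finv_aux ltnS leq_addr.
Qed.

Lemma finvS f n : finv f n.+1 =
  - (f 0%N)^-1 * \sum_(i < n.+1) f i.+1 * finv f (n - i)%N.
Proof.
rewrite {1}/Defs.finv /= nth_rcons size_finv_aux ltnn eqxx.
congr (_ * _); apply: eq_bigr => i _; by rewrite nth_finv_aux ?leq_subr.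
Qed.

Lemma fmul_finv f n : f 0%N != 0 -> fmul f (finv f) n = fone n.
Proof.
move=> h0; case: n => [|n].
  by rewrite /fmul big_ord1 /finv /= divff.
rewrite /fmul big_ord_recl /= subn0 finvS /fone /=.
rewrite mulrA mulrN mulrV // mulN1r.
have -> : \sum_(i < n.+1) f (bump 0 i) * finv f (n.+1 - bump 0 i)%N =
  \sum_(i < n.+1) f i.+1 * finv f (n - i)%N by apply: eq_bigr => i _; rewrite /bump /= add1n subSS.
by rewrite addNr.
Qed.

Definition P (N : nat) (f : fps) : {poly rat} := \poly_(i < N) f i.
Definition eqm (N : nat) (p q : {poly rat}) := forall i, (i < N)%N -> p`_i = q`_i.

Lemma eqm_trans N p q r : eqm N p q -> eqm N q r -> eqm N p r.
Proof. by move=> h1 h2 i hi; rewrite h1 // h2. Qed.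
Lemma eqm_sym N p q : eqm N p q -> eqm N q p.
Proof. by move=> h i hi; rewrite h. Qed.
Lemma eqm_refl N p : eqm N p p.
Proof. by []. Qed.

Lemma eqmM N p p' q q' : eqm N p p' -> eqm N q q' -> eqm N (p * q) (p' * q').
Proof.
move=> h1 h2 i hi; rewrite !coefM; apply: eq_bigr => j _.
have hj : (j < N)%N by apply: leq_ltn_trans hi; rewrite -ltnS.
have hj' : (i - j < N)%N by apply: leq_ltn_trans hi; rewrite leq_subr.
by rewrite h1 // h2.
Qed.

Lemma eqmD N p p' q q' : eqm N p p' -> eqm N q q' -> eqm N (p + q) (p' + q').
Proof. by move=> h1 h2 i hi; rewrite !coefD h1 // h2. Qed.

Lemma PM N f g : eqm N (P N (fmul f g)) (P N f * P N g).
Proof.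
move=> i hi; rewrite coefM coef_poly hi /fmul; apply: eq_bigr => j _.
have hj : (j < N)%N by apply: leq_ltn_trans hi; rewrite -ltnS.
have hj' : (i - j < N)%N by apply: leq_ltn_trans hi; rewrite leq_subr.
by rewrite !coef_poly hj hj'.
Qed.

Lemma PD N f g : eqm N (P N (fadd f g)) (P N f + P N g).
Proof. by move=> i hi; rewrite coefD !coef_poly hi. Qed.

Lemma PZ N c f : eqm N (P N (fscale c f)) (c%:P * P N f).
Proof. by move=> i hi; rewrite coefCM !coef_poly hi. Qed.

Lemma Pone N : eqm N (P N fone) 1.
Proof. by move=> i hi; rewrite coef1 coef_poly hi /fone; case: (i == 0)%N. Qed.

Lemma fexp_mul a b i : fmul (fexp a) (fexp b) i = fexp (a + b) i.
Proof.
rewrite /fmul /fexp addrC exprDn mulr_suml; apply: eq_bigr => j _.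
have hj : (j <= i)%N by rewrite -ltnS.
have h : ('C(i,j)%:R : rat) * (j`!%:R * (i-j)`!%:R) = i`!%:R
  by rewrite -!natrM bin_fact.
have h1 : (j`!%:R : rat) != 0 by rewrite pnatr_eq0 -lt0n fact_gt0.
have h2 : ((i-j)`!%:R : rat) != 0 by rewrite pnatr_eq0 -lt0n fact_gt0.
have h3 : ('C(i,j)%:R : rat) != 0 by rewrite pnatr_eq0 -lt0n bin_gt0.
rewrite -mulr_natr -h; field.
by rewrite h3 h1 h2.
Qed.

Lemma Pexp N a b : eqm N (P N (fexp a) * P N (fexp b)) (P N (fexp (a + b))).
Proof.
by move=> i hi; rewrite -PM // !coef_poly hi fexp_mul.
Qed.

Lemma Pexp_pow N (m : nat) : eqm N (P N (fexp m%:R)) (P N (fexp 1) ^+ m).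
Proof.
elim: m => [|m IH].
  rewrite expr0 => i hi; rewrite -(Pone hi) !coef_poly hi /fexp /fone expr0n.
  by case: i {hi} => //= i; rewrite mul0r.
rewrite exprS mulrC => i hi; rewrite -(eqmM IH (@eqm_refl _ _) hi).
by rewrite -natr1 Pexp.
Qed.

Lemma Pinv N : eqm N (P N (finv fexp_plus1) * (P N (fexp 1) + 1)) 1.
Proof.
move=> i hi.
rewrite (eqmM (@eqm_refl _ _) (eqm_sym (eqmD (@eqm_refl _ _) (@Pone N))) hi).
rewrite (eqmM (@eqm_refl _ _) (eqm_sym (PD _ _)) hi) mulrC -PM // coef_poly hi.
rewrite fmul_finv; first by rewrite coef1 /fone; case: (i == 0)%N.
by rewrite /fexp_plus1 /fadd /fexp /fone /=.
Qed.

Section Key.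
Variable k : int.
Let A := fcomp (fEi k) flog1p.
Let B := finv fexp_plus1.

Lemma key (x n : nat) : (0 < x)%N ->
  (-1) ^+ (x - 1) * polyGenocchi k x%:R n + polyGenocchi k 0 n =
  2 * n`!%:R * (P n.+1 A * \sum_(i < x) (-1) ^+ i *: P n.+1 (fexp i%:R))`_n.
Proof.
case: x => // x' _; set N := n.+1.
set a := P N A; set b := P N B; set e := P N (fexp 1).
have hn : (n < N)%N by [].
have hG y : polyGenocchi k y n = n`!%:R * (2%:P * (a*b) * P N (fexp y))`_n.
  rewrite /polyGenocchi; congr (_ * _).
  have h1 : eqm N (P N (fmul (fscale 2 (fmul A B)) (fexp y))) (2%:P * (a*b) * P N (fexp y)).
    apply: eqm_trans (PM _ _) _; apply: eqmM => //.
    apply: eqm_trans (PZ _ _) _; apply: eqmM => //; exact: PM.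
  by rewrite -h1 // coef_poly hn.
have e0 : eqm N (P N (fexp 0)) 1.
  by have := Pexp_pow (N:=N) 0; rewrite mulr0n expr0.
have hs : eqm N (\sum_(i < x'.+1) (-1) ^+ i *: P N (fexp i%:R)) (\sum_(i < x'.+1) (- e) ^+ i).
  move=> i hi; rewrite !coef_sum; apply: eq_bigr => j _.
  by rewrite coefZ (Pexp_pow _ hi) [in RHS]exprNn -polyC1 -polyCN -rmorphXn coefCM.
rewrite !hG (eqmM (@eqm_refl _ _) (Pexp_pow (N:=N) x'.+1) hn) (eqmM (@eqm_refl _ _) e0 hn).
rewrite (eqmM (@eqm_refl _ _) hs hn) -/e.
have tel : (e + 1) * (\sum_(i < x'.+1) (- e) ^+ i) = 1 - (- e) ^+ x'.+1.
  have h := subrX1 (- e) x'.+1; rewrite -opprB h; ring.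
move: (\sum_(i < x'.+1) (- e) ^+ i) tel => S tel.
rewrite subSS subn0.
have -> : (-1) ^+ x' * (n`!%:R * (2%:P * (a * b) * e ^+ x'.+1)`_n) =
   n`!%:R * (((-1) ^+ x')%:P * (2%:P * (a * b) * e ^+ x'.+1))`_n.
  by rewrite coefCM; ring.
rewrite [RHS](_ : _ = n`!%:R * (2%:P * (a*S))`_n); last by rewrite coefCM; ring.
rewrite -mulrDr; congr (_ * _); rewrite -coefD.
have E : ((-1) ^+ x')%:P * (2%:P * (a * b) * e ^+ x'.+1) + 2%:P * (a * b) * 1 =
    2%:P * a * S * (b * (e + 1)).
  rewrite [RHS](_ : _ = 2%:P * a * b * ((e+1)*S)); last by ring.
  rewrite tel [in RHS]exprNn rmorphXn rmorphN1 !exprS; ring.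
by rewrite E (eqmM (@eqm_refl _ _) (@Pinv N) hn) mulr1 mulrA.
Qed.
End Key.

Lemma pointwise (k : int) (n M j : nat) (u v w : rat) : (M <= n)%N ->
  n`!%:R * (fEi k j.+1 * v * (u * (w / (n - M)`!%:R))) =
  u * w * ('C(n, M))%:R * ((M`!)%:R * v / (j.+1`!)%:R) / ((j.+1)%:R ^ (k - 1)).
Proof.
move=> hM.
have h : ('C(n,M)%:R : rat) = n`!%:R / (M`!%:R * (n-M)`!%:R).
  rewrite -(bin_fact hM) !natrM mulfK //.
  by rewrite mulf_neq0 // pnatr_eq0 -lt0n fact_gt0.
have hJ : (j.+1%:R : rat) != 0 by rewrite pnatr_eq0.
have hk : ((j.+1)%:R : rat) ^ k = (j.+1)%:R ^ (k - 1) * (j.+1)%:R.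
  by rewrite -{1}(subrK 1 k) expfzDr // expr1z.
have hk0 : ((j.+1)%:R : rat) ^ (k - 1) != 0 by rewrite expfz_neq0.
have h1 : (M`!%:R : rat) != 0 by rewrite pnatr_eq0 -lt0n fact_gt0.
have h2 : ((n-M)`!%:R : rat) != 0 by rewrite pnatr_eq0 -lt0n fact_gt0.
have h3 : (j`!%:R : rat) != 0 by rewrite pnatr_eq0 -lt0n fact_gt0.
rewrite h /fEi /= hk factS natrM; field.
have hJ2 : (1 + j%:R : rat) != 0 by rewrite addrC natr1.
by rewrite ?hk0 ?hJ ?h3 ?h1 ?h2 ?hJ2.
Qed.

Lemma rhs (k : int) (x n : nat) :
  n`!%:R * (P n.+1 (fcomp (fEi k) flog1p) * \sum_(i < x) (-1) ^+ i *: P n.+1 (fexp i%:R))`_n =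
  \sum_(1 <= m < n.+1) \sum_(1 <= j < m.+1) \sum_(0 <= i < x)
      (-1) ^+ i * (i%:R : rat) ^+ (n - m) * ('C(n, m))%:R
        * stirling1 m j / ((j%:R : rat) ^ (k - 1)).
Proof.
rewrite coefM big_ord_recl /= coef_poly /= /fcomp big_ord1 {1}/fEi /= !mul0r add0r.
rewrite big_add1 /= big_mkord mulr_sumr; apply: eq_bigr => m _.
rewrite /bump /= add1n coef_poly ltnS ltn_ord big_ord_recl {1}/fEi /= mul0r add0r.
rewrite big_add1 /= big_mkord !mulr_suml mulr_sumr; apply: eq_bigr => j _.
rewrite coef_sum big_mkord mulr_sumr mulr_sumr; apply: eq_bigr => i _.
rewrite coefZ coef_poly ltnS leq_subr /fexp /stirling1 /bump /= add1n.
by rewrite add0n pointwise.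
Qed.

Theorem corollary5 (k : int) (x n : nat) (hx : (0 < x)%N) (hn : (0 < n)%N) :
  (-1) ^+ (x - 1) * polyEuler k x%:R (n - 1) + polyEuler k 0 (n - 1) =
  2 / n%:R *
    \sum_(1 <= m < n.+1) \sum_(1 <= j < m.+1) \sum_(0 <= i < x)
      (-1) ^+ i * (i%:R : rat) ^+ (n - m) * ('C(n, m))%:R
        * stirling1 m j / ((j%:R : rat) ^ (k - 1)).
Proof.
rewrite -rhs; have H := key k n hx.
case: n hn H => // n' _ H; rewrite subSS subn0 /polyEuler.
rewrite mulrA -mulrDl H; ring.
Qed.
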